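(* Let $\Gamma$ be a finite nilpotent group of order $n=\prod_{p\mid n}p^{v_p}$, and for each prime $p\mid n$ let $\Gamma_p$ denote the Sylow $p$-subgroup of $\Gamma$. Then for every nilpotent group $G$ of order $n$, with Sylow $p$-subgroups $G_p$, we have $$e(\Gamma,G)=\prod_{p\mid n} e(\Gamma_p,G_p).$$
   Context: For finite groups $\Gamma$ and $G$ of the same order, $e(\Gamma,G)$ denotes the number of Hopf-Galois structures of type $G$ on a Galois field extension $L/K$ with $\mathrm{Gal}(L/K)\cong\Gamma$. Here a Hopf-Galois structure given by a $K$-Hopf algebra $H$ has type $G$ if $L\otimes_K H\cong L[G]$ for the corresponding regular permutation group $G$ on $\Gamma$ (Greither–Pareigis). Equivalently (and this is the working definition), $e(\Gamma,G)$ is the number of equivalence classes of regular embeddings $\beta:\Gamma\to\mathrm{Hol}(G)$, where $\mathrm{Hol}(G)=\rho(G)\cdot\mathrm{Aut}(G)\subseteq \mathrm{Perm}(G)$ is the holomorph of $G$ with $\rho(g)(x)=xg^{-1}$, a regular embedding is an injective homomorphism whose image acts regularly (simply transitively) on $G$, and two regular embeddings are equivalent if they are conjugate by an element of $\mathrm{Aut}(G)$. A finite group is nilpotent iff it is the direct product of its Sylow subgroups. *)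

(* Defs.v *)
From mathcomp Require Import all_boot all_fingroup all_solvable.
Set Implicit Arguments. Unset Strict Implicit. Unset Printing Implicit Defensive.
Import GroupScope.
Local Open Scope group_scope.

Section Hopf.
Variables (gT hT : finGroupType).

(* Right translation rho(g) : x |-> x g^-1 on B, restricted as a permutation
   of hT that fixes every point outside B. *)
(* Hol(B) = rho(B) . Aut(B), realised inside Perm(B) viewed as the permutations
   of hT that fix every point outside B. *)
Definition Hol (B : {set hT}) : {set {perm hT}} :=
  [set p : {perm hT} | [forall x in ~: B, p x == x] &&
     [exists g in B, exists s in Aut B, [forall x in B, p x == s (x * g^-1)]]].

(* A homomorphism beta : A -> Hol(B) is encoded as a finite function,
   trivial (= 1) outside A (the usual mathcomp convention for morphisms). *)
Definition regular_embedding (A : {set gT}) (B : {set hT})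
    (f : {ffun gT -> {perm hT}}) : bool :=
  [&& [forall a in ~: A, f a == 1],
      [forall a in A, forall b in A, f (a * b) == f a * f b],
      [forall a in A, forall b in A, (f a == f b) ==> (a == b)],
      [forall a in A, f a \in Hol B] &
      [forall x in B, forall y in B, #|[set a in A | f a x == y]| == 1%N]].

Definition reg_embs (A : {set gT}) (B : {set hT}) : {set {ffun gT -> {perm hT}}} :=
  [set f | regular_embedding A B f].

Definition conj_emb (f : {ffun gT -> {perm hT}}) (s : {perm hT}) :
    {ffun gT -> {perm hT}} := [ffun a => f a ^ s].

Definition emb_class (A : {set gT}) (B : {set hT}) (f : {ffun gT -> {perm hT}}) :=
  [set f' in reg_embs A B | [exists s in Aut B, f' == conj_emb f s]].

Definition e_HG (A : {set gT}) (B : {set hT}) : nat :=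
  #|[set emb_class A B f | f in reg_embs A B]|.

End Hopf.

(* Main.v *)
Require Import Defs.
From mathcomp Require Import all_boot all_fingroup all_solvable.
Set Implicit Arguments. Unset Strict Implicit. Unset Printing Implicit Defensive.
Import GroupScope.
Local Open Scope group_scope.

Definition mkperm (T : finType) (f : T -> T) : {perm T} := @insubd _ _ {perm T} (1 : {perm T}) (finfun f).

Lemma mkpermE (T : finType) (f : T -> T) : injective f -> mkperm f =1 f.
Proof.
move=> injf x; rewrite /mkperm.
have := perm_proof injf => hb.
rewrite unlock /= insubdK // ffunE //.
Qed.

Section DP.
Variables (T : finGroupType) (pi : nat_pred) (K C D : {group T}).
Hypotheses (dp : C \x D = K) (piC : pi.-group C) (piD : pi^'.-group D).

Lemma dp_sub : C \subset K /\ D \subset K.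
Proof.
have [_ <- _ _] := dprodP dp; split; [exact: mulG_subl | exact: mulG_subr].
Qed.

Lemma dp_cent c d : c \in C -> d \in D -> commute c d.
Proof.
have [_ _ cCD _] := dprodP dp => Cc Dd.
by apply: esym; apply: (centP (subsetP cCD d Dd)).
Qed.

Lemma dp_piC c : c \in C -> c.`_pi = c.
Proof. by move=> Cc; apply: constt_p_elt; apply: mem_p_elt piC Cc. Qed.
Lemma dp_piC' c : c \in C -> c.`_pi^' = 1.
Proof. by move=> Cc; apply/constt1P; rewrite p_eltNK; apply: mem_p_elt piC Cc. Qed.
Lemma dp_piD d : d \in D -> d.`_pi = 1.
Proof. by move=> Dd; apply/constt1P; apply: mem_p_elt piD Dd. Qed.
Lemma dp_piD' d : d \in D -> d.`_pi^' = d.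
Proof. by move=> Dd; apply: constt_p_elt; apply: mem_p_elt piD Dd. Qed.

Lemma dp_pi c d : c \in C -> d \in D -> (c * d).`_pi = c.
Proof. by move=> Cc Dd; rewrite consttM ?(dp_piC Cc) ?(dp_piD Dd) ?mulg1 //; apply: dp_cent. Qed.
Lemma dp_pi' c d : c \in C -> d \in D -> (c * d).`_pi^' = d.
Proof. by move=> Cc Dd; rewrite consttM ?(dp_piC' Cc) ?(dp_piD' Dd) ?mul1g //; apply: dp_cent. Qed.

Lemma dp_dec x : x \in K -> exists2 c, c \in C & exists2 d, d \in D & x = c * d.
Proof.
have [_ eK _ _] := dprodP dp; rewrite -eK => /mulsgP[c d Cc Dd ->].
by exists c => //; exists d.
Qed.

Lemma dp_memC x : x \in K -> x.`_pi \in C.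
Proof. by case/dp_dec=> c Cc [d Dd ->]; rewrite dp_pi. Qed.
Lemma dp_memD x : x \in K -> x.`_pi^' \in D.
Proof. by case/dp_dec=> c Cc [d Dd ->]; rewrite dp_pi'. Qed.

Lemma dp_M x y : x \in K -> y \in K -> (x * y).`_pi = x.`_pi * y.`_pi.
Proof.
case/dp_dec=> c Cc [d Dd ->]; case/dp_dec=> c' Cc' [d' Dd' ->].
rewrite mulgA -(mulgA c) -(dp_cent Cc' Dd) mulgA -mulgA.
by rewrite !dp_pi ?groupM.
Qed.
Lemma dp_M' x y : x \in K -> y \in K -> (x * y).`_pi^' = x.`_pi^' * y.`_pi^'.
Proof.
case/dp_dec=> c Cc [d Dd ->]; case/dp_dec=> c' Cc' [d' Dd' ->].
rewrite mulgA -(mulgA c) -(dp_cent Cc' Dd) mulgA -mulgA.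
by rewrite !dp_pi' ?groupM.
Qed.

Lemma dp_eq (x y : T) : x.`_pi = y.`_pi -> x.`_pi^' = y.`_pi^' -> x = y.
Proof. by move=> e1 e2; rewrite -(consttC pi x) -(consttC pi y) e1 e2. Qed.

Lemma dp_inC x : x \in K -> (x \in C) = (x.`_pi^' == 1).
Proof.
move=> Kx; apply/idP/eqP => [/dp_piC'//|e].
by rewrite -(consttC pi x) e mulg1 dp_memC.
Qed.
Lemma dp_inD x : x \in K -> (x \in D) = (x.`_pi == 1).
Proof.
move=> Kx; apply/idP/eqP => [/dp_piD//|e].
by rewrite -(consttC pi x) e mul1g dp_memD.
Qed.

End DP.

Definition comb (T : finGroupType) (pi : nat_pred) (G : {set T}) (h1 h2 : {perm T}) : {perm T} :=
  mkperm (fun x => if x \in G then h1 x.`_pi * h2 x.`_pi^' else x).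
Definition prj (T : finGroupType) (pi : nat_pred) (C : {set T}) (h : {perm T}) : {perm T} :=
  mkperm (fun x => if x \in C then (h x).`_pi else x).
Definition compat (T : finGroupType) (pi : nat_pred) (G : {set T}) (h : {perm T}) :=
  [/\ forall x, x \in G -> h x \in G,
      forall x, x \in G -> (h x).`_pi = (h x.`_pi).`_pi &
      forall x, x \in G -> (h x).`_pi^' = (h x.`_pi^').`_pi^'].

Lemma aut_constt (T : finGroupType) (G : {group T}) (s : {perm T}) pi x :
  s \in Aut G -> x \in G -> s (x.`_pi) = (s x).`_pi.
Proof. by move=> sG Gx; exact: (morph_constt (autm sG) pi Gx). Qed.

Lemma HolE (T : finGroupType) (B : {set T}) (h : {perm T}) : h \in Hol B ->
  (forall x, x \notin B -> h x = x) /\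
  exists2 g, g \in B & exists2 s, s \in Aut B & forall x, x \in B -> h x = s (x * g^-1).
Proof.
rewrite inE => /andP[/forall_inP H1 /exists_inP[g Bg /exists_inP[s As /forall_inP H2]]].
split=> [x Bx|]; first by apply/eqP/H1; rewrite inE.
by exists g => //; exists s => // x Bx; apply/eqP/H2.
Qed.

Lemma HolI (T : finGroupType) (B : {set T}) (h : {perm T}) g s :
  (forall x, x \notin B -> h x = x) -> g \in B -> s \in Aut B ->
  (forall x, x \in B -> h x = s (x * g^-1)) -> h \in Hol B.
Proof.
move=> H1 Bg As H2; rewrite inE; apply/andP; split.
  by apply/forall_inP=> x; rewrite inE => /H1 ->.
apply/exists_inP; exists g => //; apply/exists_inP; exists s => //.
by apply/forall_inP=> x /H2 ->.
Qed.

Lemma Hol_perm_on (T : finGroupType) (B : {set T}) (h : {perm T}) : h \in Hol B -> perm_on B h.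
Proof.
case/HolE=> H1 _; apply/subsetP=> x; rewrite inE; apply: contraR => /H1 ->.
by rewrite eqxx.
Qed.

Lemma Hol_closed (T : finGroupType) (B : {group T}) (h : {perm T}) x : h \in Hol B -> x \in B -> h x \in B.
Proof. by move/Hol_perm_on=> hB Bx; rewrite perm_closed. Qed.

Lemma Aut_Hol (T : finGroupType) (B : {group T}) s : s \in Aut B -> s \in Hol B.
Proof.
move=> As; apply: (HolI (g := 1) (s := s)) => //.
- by move=> x; apply: out_Aut.
- by move=> x _; rewrite invg1 mulg1.
Qed.

Section CP1.
Variables (T : finGroupType) (pi : nat_pred) (G C D : {group T}).
Hypotheses (dp : C \x D = G) (piC : pi.-group C) (piD : pi^'.-group D).

Let sC := (dp_sub dp).1.
Let sD := (dp_sub dp).2.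
Let inG x : x \in C -> x \in G := subsetP sC x.
Let inG' x : x \in D -> x \in G := subsetP sD x.
Let memC x : x \in G -> x.`_pi \in C := dp_memC dp piC piD (x:=x).
Let memD x : x \in G -> x.`_pi^' \in D := dp_memD dp piC piD (x:=x).
Let pcE c d : c \in C -> d \in D -> (c * d).`_pi = c := dp_pi dp piC piD (c:=c) (d:=d).
Let pcE' c d : c \in C -> d \in D -> (c * d).`_pi^' = d := dp_pi' dp piC piD (c:=c) (d:=d).
Let piCE c : c \in C -> c.`_pi = c := dp_piC piC (c:=c).
Let piCE' c : c \in C -> c.`_pi^' = 1 := dp_piC' piC (c:=c).
Let piDE d : d \in D -> d.`_pi = 1 := dp_piD piD (d:=d).
Let piDE' d : d \in D -> d.`_pi^' = d := dp_piD' piD (d:=d).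

Lemma combE h1 h2 x : perm_on C h1 -> perm_on D h2 ->
  comb pi G h1 h2 x = if x \in G then h1 x.`_pi * h2 x.`_pi^' else x.
Proof.
move=> p1 p2; rewrite /comb mkpermE // => y z.
have memf u : u \in G -> h1 u.`_pi * h2 u.`_pi^' \in G.
  by move=> Gu; rewrite groupM //; [apply: inG; rewrite (perm_closed _ p1) memC | apply: inG'; rewrite (perm_closed _ p2) memD].
case: ifP => Gy; case: ifP => Gz.
- move=> e.
  have e1 := congr1 (fun t => t.`_pi) e; have e2 := congr1 (fun t => t.`_pi^') e.
  rewrite /= !pcE ?pcE' ?perm_closed ?memC ?memD // in e1 e2.
  apply: (dp_eq (pi := pi)); [exact: perm_inj e1 | exact: perm_inj e2].
- by move=> e; move: (memf y Gy); rewrite e Gz.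
- by move=> e; move: (memf z Gz); rewrite -e Gy.
- by [].
Qed.

Lemma comb_perm_on h1 h2 : perm_on C h1 -> perm_on D h2 -> perm_on G (comb pi G h1 h2).
Proof.
move=> p1 p2; apply/subsetP=> x; rewrite inE combE //.
by case: ifP => // _; rewrite eqxx.
Qed.

Lemma comb_compat h1 h2 : perm_on C h1 -> perm_on D h2 -> compat pi G (comb pi G h1 h2).
Proof.
move=> p1 p2.
have mC u : u \in G -> h1 u.`_pi \in C by move=> Gu; rewrite perm_closed ?memC.
have mD u : u \in G -> h2 u.`_pi^' \in D by move=> Gu; rewrite perm_closed ?memD.
have GC u : u \in G -> u.`_pi \in G by move=> Gu; apply/inG/memC.
have GD u : u \in G -> u.`_pi^' \in G by move=> Gu; apply/inG'/memD.
split=> x Gx; rewrite !combE ?Gx ?GC ?GD //.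
- by rewrite groupM //; [apply: inG; apply: mC | apply: inG'; apply: mD].
- rewrite !pcE ?mC ?mD ?GC //.
  by rewrite (piCE (memC Gx)).
- rewrite !pcE' ?mC ?mD ?GD //.
  by rewrite (piDE' (memD Gx)).
Qed.

Lemma prjE h : compat pi G h ->
  prj pi C h =1 fun x => if x \in C then (h x).`_pi else x.
Proof.
case=> hG h1 h2; rewrite /prj; apply: mkpermE => y z.
case: ifP => Cy; case: ifP => Cz.
- move=> e; have Gy := inG Cy; have Gz := inG Cz.
  have e2 : (h y).`_pi^' = (h z).`_pi^'.
    by rewrite (h2 y) // (h2 z) // (piCE' Cy) (piCE' Cz).
  by apply: (perm_inj (s := h)); apply: (dp_eq (pi := pi)).
- by move=> e; move: (memC (hG _ (inG Cy))); rewrite e Cz.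
- by move=> e; move: (memC (hG _ (inG Cz))); rewrite -e Cy.
- by [].
Qed.

Lemma prj_perm_on h : compat pi G h -> perm_on C (prj pi C h).
Proof.
move=> ch; apply/subsetP=> x; rewrite inE prjE //.
by case: ifP => // _; rewrite eqxx.
Qed.

Lemma prj_comb h1 h2 : perm_on C h1 -> perm_on D h2 -> prj pi C (comb pi G h1 h2) = h1.
Proof.
move=> p1 p2; apply/permP=> x; rewrite prjE; last exact: comb_compat.
case: ifP => Cx; last by by rewrite (out_perm p1) ?Cx.
rewrite combE // inG // (piCE Cx) (piCE' Cx).
by rewrite pcE ?(perm_closed _ p1) ?(perm_closed _ p2).
Qed.

End CP1.

Section CP2.
Variables (T : finGroupType) (pi : nat_pred) (G C D : {group T}).
Hypotheses (dp : C \x D = G) (piC : pi.-group C) (piD : pi^'.-group D).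

Let sC := (dp_sub dp).1.
Let sD := (dp_sub dp).2.
Let inG x : x \in C -> x \in G := subsetP sC x.
Let inG' x : x \in D -> x \in G := subsetP sD x.
Let memC x : x \in G -> x.`_pi \in C := dp_memC dp piC piD (x:=x).
Let memD x : x \in G -> x.`_pi^' \in D := dp_memD dp piC piD (x:=x).
Let pcE c d : c \in C -> d \in D -> (c * d).`_pi = c := dp_pi dp piC piD (c:=c) (d:=d).
Let pcE' c d : c \in C -> d \in D -> (c * d).`_pi^' = d := dp_pi' dp piC piD (c:=c) (d:=d).
Let piCE c : c \in C -> c.`_pi = c := dp_piC piC (c:=c).
Let piCE' c : c \in C -> c.`_pi^' = 1 := dp_piC' piC (c:=c).
Let piDE d : d \in D -> d.`_pi = 1 := dp_piD piD (d:=d).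
Let piDE' d : d \in D -> d.`_pi^' = d := dp_piD' piD (d:=d).

Let dp' : D \x C = G. Proof. by rewrite dprodC. Qed.
Let piC' : pi^'^'.-group C. Proof. by rewrite pgroupNK. Qed.

Lemma compat_sym h : compat pi G h -> compat pi^' G h.
Proof. by case=> h1 h2 h3; split=> x Gx; [exact: h1 | exact: h3 | rewrite !consttNK; exact: h2]. Qed.

Lemma comb_sym h1 h2 : perm_on C h1 -> perm_on D h2 ->
  comb pi^' G h2 h1 = comb pi G h1 h2.
Proof.
move=> p1 p2; apply/permP=> x.
rewrite (combE dp piC piD) // (combE dp' piD piC') //.
case: ifP => // Gx; rewrite consttNK.
apply: esym; apply: (dp_cent dp).
  by rewrite (perm_closed _ p1) memC.
by rewrite (perm_closed _ p2) memD.
Qed.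

Lemma prj_comb' h1 h2 : perm_on C h1 -> perm_on D h2 -> prj pi^' D (comb pi G h1 h2) = h2.
Proof.
by move=> p1 p2; rewrite -comb_sym // (prj_comb dp' piD piC').
Qed.

Lemma comb_pr h : compat pi G h -> perm_on G h ->
  comb pi G (prj pi C h) (prj pi^' D h) = h.
Proof.
move=> ch pG; have ch' := compat_sym ch.
have p1 := prj_perm_on dp piC piD ch.
have p2 := prj_perm_on dp' piD piC' ch'.
apply/permP=> x; rewrite (combE dp piC piD) //.
case: ifP => Gx; last by rewrite (out_perm pG) ?Gx.
rewrite (prjE dp piC piD ch) (prjE dp' piD piC' ch') (memC Gx) (memD Gx).
case: ch => _ h2 h3; by rewrite -h2 // -h3 // consttC.
Qed.

Lemma comb_mul h1 h2 k1 k2 : perm_on C h1 -> perm_on D h2 -> perm_on C k1 -> perm_on D k2 ->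
  comb pi G h1 h2 * comb pi G k1 k2 = comb pi G (h1 * k1) (h2 * k2).
Proof.
move=> p1 p2 q1 q2; apply/permP=> x.
rewrite permM !(combE dp piC piD) ?perm_onM //.
have [Gx|nGx] := boolP (x \in G); last by rewrite !(negbTE nGx).
have c1 : h1 x.`_pi \in C by rewrite (perm_closed _ p1) memC.
have c2 : h2 x.`_pi^' \in D by rewrite (perm_closed _ p2) memD.
have -> : h1 x.`_pi * h2 x.`_pi^' \in G.
  by rewrite groupM //; [apply: inG | apply: inG'].
by rewrite pcE // pcE' // !permM.
Qed.

Lemma comb_one : comb pi G 1 1 = 1.
Proof.
apply/permP=> x; rewrite (combE dp piC piD) ?perm_on1 //.
case: ifP => _; last by rewrite perm1. by rewrite !perm1 consttC.
Qed.

Lemma Hol_compat h : h \in Hol G -> compat pi G h.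
Proof.
case/HolE=> _ [g Gg [s As hE]].
have GC u : u \in G -> u.`_pi \in G by move=> Gu; apply/inG/memC.
have GD u : u \in G -> u.`_pi^' \in G by move=> Gu; apply/inG'/memD.
split=> x Gx.
- by rewrite hE // Aut_closed // groupM ?groupV.
- rewrite !hE ?GC // -!(aut_constt _ As) ?groupM ?groupV ?GC //.
  by rewrite !(dp_M dp piC piD) ?groupV ?GC // (piCE (memC Gx)).
- rewrite !hE ?GD // -!(aut_constt _ As) ?groupM ?groupV ?GD //.
  by rewrite !(dp_M' dp piC piD) ?groupV ?GD // (piDE' (memD Gx)).
Qed.

Lemma Aut_mapC s c : s \in Aut G -> c \in C -> s c \in C.
Proof.
move=> As Cc; have Gs := Aut_closed As (inG Cc).
by rewrite (dp_inC dp piC piD Gs) -(aut_constt _ As) ?inG // piCE' // -(autmE As) morph1.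
Qed.

Lemma prj_Aut s : s \in Aut G -> prj pi C s \in Aut C.
Proof.
move=> As; have ch := Hol_compat (Aut_Hol As).
rewrite inE (prj_perm_on dp piC piD ch) /=; apply/morphicP=> x y Cx Cy.
have mC u : u \in C -> (s u).`_pi = s u by move=> Cu; rewrite piCE // Aut_mapC.
rewrite !(prjE dp piC piD ch) groupM // Cx Cy !mC ?groupM //.
by rewrite -(autmE As) morphM ?inG.
Qed.

Lemma prj_Hol h : h \in Hol G -> prj pi C h \in Hol C.
Proof.
move=> Hh; have ch := Hol_compat Hh; have := Hh; case/HolE=> _ [g Gg [s As hE]].
apply: (HolI (g := g.`_pi) (s := prj pi C s)).
- by move=> x Cx; rewrite (prjE dp piC piD ch) (negbTE Cx).
- exact: memC.
- exact: prj_Aut.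
move=> x Cx; have chs := Hol_compat (Aut_Hol As).
have Gg' : g.`_pi \in G by apply/inG/memC.
have xG : x \in G := inG Cx.
rewrite (prjE dp piC piD ch) (prjE dp piC piD chs) Cx groupM ?groupV ?memC //.
rewrite hE // -!(aut_constt _ As) ?groupM ?groupV //.
by rewrite !(dp_M dp piC piD) ?groupV // !consttV (piCE (memC Gg)).
Qed.

Lemma comb_Aut s1 s2 : s1 \in Aut C -> s2 \in Aut D -> comb pi G s1 s2 \in Aut G.
Proof.
move=> A1 A2; have p1 : perm_on C s1 by case/setIdP: A1.
have p2 : perm_on D s2 by case/setIdP: A2.
rewrite inE (comb_perm_on dp piC piD p1 p2) /=; apply/morphicP=> x y Gx Gy.
rewrite !(combE dp piC piD) // groupM ?Gx ?Gy //.
rewrite (dp_M dp piC piD) // (dp_M' dp piC piD) //.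
have mo1 := morphicP (Aut_morphic A1); have mo2 := morphicP (Aut_morphic A2).
rewrite mo1 ?memC // mo2 ?memD //.
rewrite -!mulgA; congr (_ * _); rewrite !mulgA; congr (_ * _).
by apply: (dp_cent dp); [rewrite (perm_closed _ p1) memC | rewrite (perm_closed _ p2) memD].
Qed.

Lemma comb_Hol h1 h2 : h1 \in Hol C -> h2 \in Hol D -> comb pi G h1 h2 \in Hol G.
Proof.
move=> H1 H2; have p1 := Hol_perm_on H1; have p2 := Hol_perm_on H2.
case/HolE: H1 => _ [g1 Cg1 [s1 A1 E1]]; case/HolE: H2 => _ [g2 Dg2 [s2 A2 E2]].
apply: (HolI (g := g1 * g2) (s := comb pi G s1 s2)).
- by move=> x Gx; rewrite (combE dp piC piD) // (negbTE Gx).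
- by rewrite groupM //; [apply: inG | apply: inG'].
- exact: comb_Aut.
move=> x Gx.
have q1 : perm_on C s1 by case/setIdP: A1.
have q2 : perm_on D s2 by case/setIdP: A2.
have Gg : g1 * g2 \in G by rewrite groupM //; [apply: inG | apply: inG'].
rewrite !(combE dp piC piD) // Gx groupM ?groupV //.
rewrite E1 ?memC // E2 ?memD //.
rewrite (dp_M dp piC piD) ?groupV // (dp_M' dp piC piD) ?groupV // !consttV.
by rewrite pcE // pcE' //.
Qed.

End CP2.

Lemma perm_onJ (T : finType) (S : {set T}) (h s : {perm T}) :
  perm_on S h -> perm_on S s -> perm_on S (h ^ s).
Proof. by move=> ph ps; rewrite /conjg !perm_onM ?perm_onV. Qed.

Section CP3.
Variables (T : finGroupType) (pi : nat_pred) (G C D : {group T}).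
Hypotheses (dp : C \x D = G) (piC : pi.-group C) (piD : pi^'.-group D).

Lemma dpC : D \x C = G. Proof. by rewrite dprodC. Qed.
Lemma piNN : pi^'^'.-group C. Proof. by rewrite pgroupNK. Qed.

Lemma prj_perm_on_Hol h : h \in Hol G -> perm_on C (prj pi C h).
Proof. by move=> Hh; apply: (prj_perm_on dp piC piD); apply: (Hol_compat dp piC piD). Qed.

Lemma prj_perm_on_Hol' h : h \in Hol G -> perm_on D (prj pi^' D h).
Proof. by move=> Hh; apply: (prj_perm_on dpC piD piNN); apply: (Hol_compat dpC piD piNN). Qed.

Lemma comb_pr_Hol h : h \in Hol G -> comb pi G (prj pi C h) (prj pi^' D h) = h.
Proof.
move=> Hh; apply: (comb_pr dp piC piD); last exact: Hol_perm_on.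
exact: (Hol_compat dp piC piD).
Qed.

Lemma prj_mul h k : h \in Hol G -> k \in Hol G ->
  prj pi C (h * k) = prj pi C h * prj pi C k.
Proof.
move=> Hh Hk; rewrite -{1}(comb_pr_Hol Hh) -{1}(comb_pr_Hol Hk).
rewrite (comb_mul dp piC piD) ?prj_perm_on_Hol ?prj_perm_on_Hol' //.
by rewrite (prj_comb dp piC piD) ?perm_onM ?prj_perm_on_Hol ?prj_perm_on_Hol'.
Qed.

Lemma comb_inv h1 h2 : perm_on C h1 -> perm_on D h2 ->
  (comb pi G h1 h2)^-1 = comb pi G h1^-1 h2^-1.
Proof.
move=> p1 p2; apply/eqP; rewrite eq_invg_mul (comb_mul dp piC piD) ?perm_onV //.
by rewrite !mulgV (comb_one dp piC piD).
Qed.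

Lemma comb_conj h1 h2 s1 s2 : perm_on C h1 -> perm_on D h2 -> perm_on C s1 -> perm_on D s2 ->
  (comb pi G h1 h2) ^ (comb pi G s1 s2) = comb pi G (h1 ^ s1) (h2 ^ s2).
Proof.
move=> p1 p2 q1 q2; rewrite /conjg comb_inv //.
by rewrite !(comb_mul dp piC piD) ?perm_onV ?perm_onM ?perm_onV.
Qed.

End CP3.

Definition cls (F : finType) (X : {set F}) (R : F -> F -> bool) (f : F) := [set f' in X | R f f'].

Section Count.
Variables (F F1 F2 : finType) (X : {set F}) (X1 : {set F1}) (X2 : {set F2}).
Variables (R : F -> F -> bool) (R1 : F1 -> F1 -> bool) (R2 : F2 -> F2 -> bool).
Variable Phi : F1 -> F2 -> F.
Hypotheses (PhiX : forall f1 f2, f1 \in X1 -> f2 \in X2 -> Phi f1 f2 \in X)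
  (PhiS : forall f, f \in X -> exists2 f1, f1 \in X1 & exists2 f2, f2 \in X2 & f = Phi f1 f2)
  (PhiR : forall f1 f2 g1 g2, f1 \in X1 -> f2 \in X2 -> g1 \in X1 -> g2 \in X2 ->
      R (Phi f1 f2) (Phi g1 g2) = R1 f1 g1 && R2 f2 g2).
Hypotheses (refl1 : {in X1, forall f, R1 f f}) (refl2 : {in X2, forall f, R2 f f})
  (sym1 : {in X1 &, forall f g, R1 f g -> R1 g f}) (sym2 : {in X2 &, forall f g, R2 f g -> R2 g f})
  (tr1 : forall f g h, f \in X1 -> g \in X1 -> h \in X1 -> R1 f g -> R1 g h -> R1 f h)
  (tr2 : forall f g h, f \in X2 -> g \in X2 -> h \in X2 -> R2 f g -> R2 g h -> R2 f h).

Definition mu (K : {set F1} * {set F2}) : {set F} := [set Phi g1 g2 | g1 in K.1, g2 in K.2].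

Lemma clsPhi f1 f2 : f1 \in X1 -> f2 \in X2 ->
  cls X R (Phi f1 f2) = mu (cls X1 R1 f1, cls X2 R2 f2).
Proof.
move=> X1f X2f; apply/setP=> f; rewrite inE; apply/andP/imset2P => [[Xf Rf]|].
  have [g1 X1g [g2 X2g fe]] := PhiS Xf.
  move: Rf; rewrite fe PhiR // => /andP[r1 r2].
  by exists g1 g2 => //=; rewrite inE ?X1g ?X2g ?r1 ?r2.
case=> g1 g2 /=; rewrite !inE => /andP[X1g r1] /andP[X2g r2] ->.
by split; [apply: PhiX | rewrite PhiR // r1 r2].
Qed.

Lemma cls_eq1 f g : f \in X1 -> g \in X1 -> R1 f g -> cls X1 R1 f = cls X1 R1 g.
Proof.
move=> Xf Xg r; apply/setP=> h; rewrite !inE; apply/andP/andP=> [] [Xh r'].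
  by split=> //; apply: tr1 (sym1 Xf Xg r) r'.
by split=> //; apply: tr1 r r'.
Qed.

Lemma cls_eq2 f g : f \in X2 -> g \in X2 -> R2 f g -> cls X2 R2 f = cls X2 R2 g.
Proof.
move=> Xf Xg r; apply/setP=> h; rewrite !inE; apply/andP/andP=> [] [Xh r'].
  by split=> //; apply: tr2 (sym2 Xf Xg r) r'.
by split=> //; apply: tr2 r r'.
Qed.

Lemma count_classes :
  #|[set cls X R f | f in X]| =
  (#|[set cls X1 R1 f | f in X1]| * #|[set cls X2 R2 f | f in X2]|)%N.
Proof.
set P1 := [set cls X1 R1 f | f in X1]; set P2 := [set cls X2 R2 f | f in X2].
have -> : [set cls X R f | f in X] = mu @: setX P1 P2.
  apply/setP=> K; apply/imsetP/imsetP => [[f Xf ->]|[[K1 K2]]].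
    have [f1 X1f [f2 X2f ->]] := PhiS Xf.
    exists (cls X1 R1 f1, cls X2 R2 f2); last exact: clsPhi.
    by rewrite inE /= !imset_f.
  rewrite inE /= => /andP[/imsetP[f1 X1f ->] /imsetP[f2 X2f ->]] ->.
  by exists (Phi f1 f2); [apply: PhiX | rewrite clsPhi].
rewrite card_in_imset ?cardsX //.
move=> [K1 K2] [L1 L2]; rewrite !inE /=.
move=> /andP[/imsetP[f1 X1f ->] /imsetP[f2 X2f ->]].
move=> /andP[/imsetP[g1 X1g ->] /imsetP[g2 X2g ->]].
rewrite -!clsPhi // => e.
have : Phi g1 g2 \in cls X R (Phi f1 f2).
  by rewrite e inE PhiX // PhiR // refl1 ?refl2.
rewrite inE PhiR // => /andP[_ /andP[r1 r2]].
by rewrite (cls_eq1 X1f X1g r1) (cls_eq2 X2f X2g r2).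
Qed.

End Count.

Section Reg.
Variables (gT hT : finGroupType).
Implicit Types (f : {ffun gT -> {perm hT}}).

Lemma regE (A : {set gT}) (B : {group hT}) f : f \in reg_embs A B ->
  [/\ forall a, a \notin A -> f a = 1,
      {in A &, forall a b, f (a * b) = f a * f b},
      {in A, forall a, f a \in Hol B},
      (forall x y, x \in B -> y \in B -> exists2 a, a \in A & f a x = y) &
      (forall x a a', x \in B -> a \in A -> a' \in A -> f a x = f a' x -> a = a')].
Proof.
rewrite inE => /and5P[/forall_inP h1 /forall_inP h2 _ /forall_inP h4 /forall_inP h5].
have card1 x y : x \in B -> y \in B -> exists a0, [set a in A | f a x == y] = [set a0].
  by move=> Bx By; apply/cards1P; apply: (forall_inP (h5 x Bx)).
split.
- by move=> a nA; apply/eqP/h1; rewrite inE.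
- by move=> a b Aa Ab; apply/eqP; apply: (forall_inP (h2 a Aa)).
- by [].
- move=> x y Bx By; have [a0 e] := card1 x y Bx By.
  have : a0 \in [set a in A | f a x == y] by rewrite e set11.
  by rewrite inE => /andP[Aa /eqP]; exists a0.
- move=> x a a' Bx Aa Aa' e.
  have By : f a x \in B by apply: Hol_closed (h4 a Aa) Bx.
  have [a0 e0] := card1 x (f a x) Bx By.
  have : a \in [set z in A | f z x == f a x] by rewrite inE Aa eqxx.
  have : a' \in [set z in A | f z x == f a x] by rewrite inE Aa' e eqxx.
  by rewrite e0 !inE => /eqP -> /eqP ->.
Qed.

Lemma regI (A : {set gT}) (B : {group hT}) f :
  (forall a, a \notin A -> f a = 1) ->
  {in A &, forall a b, f (a * b) = f a * f b} ->
  {in A, forall a, f a \in Hol B} ->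
  (forall x y, x \in B -> y \in B -> exists2 a, a \in A & f a x = y) ->
  (forall x a a', x \in B -> a \in A -> a' \in A -> f a x = f a' x -> a = a') ->
  f \in reg_embs A B.
Proof.
move=> h1 h2 h3 h4 h5; rewrite inE; apply/and5P; split.
- by apply/forall_inP=> a; rewrite inE => /h1 ->.
- by apply/forall_inP=> a Aa; apply/forall_inP=> b Ab; rewrite h2.
- apply/forall_inP=> a Aa; apply/forall_inP=> b Ab; apply/implyP=> /eqP e.
  by apply/eqP; apply: (h5 1) => //; rewrite e.
- by apply/forall_inP.
- apply/forall_inP=> x Bx; apply/forall_inP=> y By.
  have [a0 Aa0 e0] := h4 x y Bx By.
  apply/cards1P; exists a0; apply/setP=> a; rewrite !inE.
  apply/andP/eqP => [[Aa /eqP e]|->]; last by rewrite Aa0 e0.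
  by apply: (h5 x) => //; rewrite e e0.
Qed.

Lemma reg_one (A : {group gT}) (B : {group hT}) f : f \in reg_embs A B -> f 1 = 1.
Proof.
case/regE=> _ hM _ _ _; have := hM 1 1 (group1 _) (group1 _); rewrite mulg1.
by move/(congr1 (fun t => t * (f 1)^-1)); rewrite mulgV mulgK.
Qed.

End Reg.

Section Key.
Variables (gT hT : finGroupType) (pi : nat_pred) (Gam A B : {group gT}) (G C D : {group hT}).
Hypotheses (dA : A \x B = Gam) (piA : pi.-group A) (piB : pi^'.-group B)
  (dG : C \x D = G) (piC : pi.-group C) (piD : pi^'.-group D) (cBD : #|B| = #|D|).

Definition uu (be : {ffun gT -> {perm hT}}) g := prj pi C (be g).

Lemma key (be : {ffun gT -> {perm hT}}) b :
  be \in reg_embs Gam G -> b \in B -> prj pi C (be b) = 1.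
Proof.
move=> Rb Bb; have [b1 bM bH bE bU] := regE Rb.
have b1' := reg_one Rb.
have inGC x : x \in C -> x \in G := subsetP (dp_sub dG).1 x.
have inGD x : x \in D -> x \in G := subsetP (dp_sub dG).2 x.
have inGB x : x \in B -> x \in Gam := subsetP (dp_sub dA).2 x.
have uM : {in Gam &, forall x y, (uu be) (x * y) = (uu be) x * (uu be) y}.
  by move=> x y Gx Gy; rewrite /uu bM // (prj_mul dG piC piD) ?bH.
have uE g x : g \in Gam -> x \in C -> (uu be) g x = (be g x).`_pi.
  move=> Gg Cx; rewrite /uu (prjE dG piC piD) ?Cx //.
  exact: (Hol_compat dG piC piD (bH g Gg)).
pose S := [set g in Gam | (uu be) g 1 == 1].
have gS : group_set S.
  apply/group_setP; split.
    by rewrite inE group1 /= uE ?group1 // b1' perm1; apply/eqP; apply: constt1.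
  move=> x y; rewrite !inE => /andP[Gx /eqP ux] /andP[Gy /eqP uy].
  by rewrite groupM // uM // permM /= ux uy.
have cS : #|S| = #|B|.
  rewrite cBD.
  have -> : D = (fun g => be g 1) @: S :> {set hT}.
    apply/setP=> y; apply/idP/imsetP => [Dy|[g]].
      have [g Gg e] := bE 1 y (group1 _) (inGD _ Dy).
      exists g; last by rewrite e.
      by rewrite inE Gg /= uE // e (dp_piD piD Dy).
    rewrite inE => /andP[Gg /eqP ug] ->.
    have Gy : be g 1 \in G by apply: Hol_closed (bH g Gg) (group1 _).
    by rewrite (dp_inD dG piC piD Gy) -uE ?ug.
  rewrite card_in_imset // => x y; rewrite !inE => /andP[Gx _] /andP[Gy _] e.
  exact: (bU 1).
have SB : S \subset B.
  apply/subsetP=> s Ss.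
  have pS : pi^'.-group (group gS) by rewrite /pgroup /= cS.
  have ps := mem_p_elt pS Ss.
  have Gs : s \in Gam by move: Ss; rewrite inE => /andP[].
  by rewrite (dp_inD dA piA piB Gs); apply/eqP/constt1P.
have eSB : S = B.
  by apply/eqP; rewrite eqEcard SB cS leqnn.
have uB b' : b' \in B -> (uu be) b' 1 = 1.
  by rewrite -eSB inE => /andP[_ /eqP].
have nB : Gam \subset 'N(B) by case: (dprod_normal2 dA) => _ /normal_norm.
apply/permP=> x; rewrite perm1.
have [Cx|nCx] := boolP (x \in C); last first.
  apply: out_perm nCx; apply: (prj_perm_on_Hol dG piC piD); exact: (bH _ (inGB _ Bb)).
have [g Gg e] := bE 1 x (group1 _) (inGC _ Cx).
have ug : (uu be) g 1 = x by rewrite uE // e (dp_piC piC Cx).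
have Bb' : b ^ g^-1 \in B by rewrite memJ_norm // (subsetP nB) ?groupV.
have eg : g * b = b ^ g^-1 * g by rewrite conjgE invgK mulgA mulgKV.
have Gb' : b ^ g^-1 \in Gam := inGB _ Bb'.
change (uu be b x = x).
by rewrite -{1}ug -permM -(uM g b Gg (inGB _ Bb)) eg (uM _ _ Gb' Gg) permM uB.
Qed.

End Key.

Definition Phi (gT hT : finGroupType) (pi : nat_pred) (Gam : {set gT}) (G : {set hT})
   (f1 f2 : {ffun gT -> {perm hT}}) : {ffun gT -> {perm hT}} :=
  [ffun g => if g \in Gam then comb pi G (f1 g.`_pi) (f2 g.`_pi^') else 1].
Definition Psi (gT hT : finGroupType) (pi : nat_pred) (A : {set gT}) (C : {set hT})
   (be : {ffun gT -> {perm hT}}) : {ffun gT -> {perm hT}} :=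
  [ffun a => if a \in A then prj pi C (be a) else 1].
Definition pre (gT hT : finGroupType) (A : {set gT}) (C : {set hT}) (f : {ffun gT -> {perm hT}}) :=
  [/\ forall a, a \notin A -> f a = 1, f 1 = 1 & forall a, a \in A -> perm_on C (f a)].

Lemma reg_pre (gT hT : finGroupType) (A : {group gT}) (C : {group hT}) f :
  f \in reg_embs A C -> pre A C f.
Proof.
move=> Rf; have [h1 _ hH _ _] := regE Rf; split=> //; first exact: reg_one Rf.
by move=> a Aa; apply: Hol_perm_on; apply: hH.
Qed.

Lemma pre_conj (gT hT : finGroupType) (A : {set gT}) (C : {set hT}) f s :
  pre A C f -> perm_on C s -> pre A C (conj_emb f s).
Proof.
case=> h1 h2 h3 ps; split; rewrite ?ffunE.
- by move=> a nA; rewrite ffunE h1 // conj1g.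
- by rewrite h2 conj1g.
- by move=> a Aa; rewrite ffunE perm_onJ // h3.
Qed.

Section Main1.
Variables (gT hT : finGroupType) (pi : nat_pred) (Gam A B : {group gT}) (G C D : {group hT}).
Hypotheses (dA : A \x B = Gam) (piA : pi.-group A) (piB : pi^'.-group B)
  (dG : C \x D = G) (piC : pi.-group C) (piD : pi^'.-group D)
  (cAC : #|A| = #|C|) (cBD : #|B| = #|D|).

Let memA g : g \in Gam -> g.`_pi \in A := dp_memC dA piA piB (x:=g).
Let memB g : g \in Gam -> g.`_pi^' \in B := dp_memD dA piA piB (x:=g).
Let inGam g : g \in A -> g \in Gam := subsetP (dp_sub dA).1 g.
Let inGam' g : g \in B -> g \in Gam := subsetP (dp_sub dA).2 g.
Let memC x : x \in G -> x.`_pi \in C := dp_memC dG piC piD (x:=x).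
Let memD x : x \in G -> x.`_pi^' \in D := dp_memD dG piC piD (x:=x).
Let inG x : x \in C -> x \in G := subsetP (dp_sub dG).1 x.
Let inG' x : x \in D -> x \in G := subsetP (dp_sub dG).2 x.

Lemma key' be a : be \in reg_embs Gam G -> a \in A -> prj pi^' D (be a) = 1.
Proof.
exact: (key (dpC dA) piB (piNN piA) (dpC dG) piD (piNN piC) cAC).
Qed.

Lemma prj_be1 be g : be \in reg_embs Gam G -> g \in Gam ->
  prj pi C (be g) = prj pi C (be g.`_pi).
Proof.
move=> Rb Gg; have [_ bM bH _ _] := regE Rb.
have Ag := memA Gg; have Bg := memB Gg; have G1 := inGam Ag; have G2 := inGam' Bg.
rewrite -{1}(consttC pi g) bM // (prj_mul dG piC piD) ?bH //.
by rewrite (key dA piA piB dG piC piD cBD Rb Bg) mulg1.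
Qed.

Lemma prj_be2 be g : be \in reg_embs Gam G -> g \in Gam ->
  prj pi^' D (be g) = prj pi^' D (be g.`_pi^').
Proof.
move=> Rb Gg; have [_ bM bH _ _] := regE Rb.
have Ag := memA Gg; have Bg := memB Gg; have G1 := inGam Ag; have G2 := inGam' Bg.
rewrite -{1}(consttC pi g) bM //.
rewrite (prj_mul (dpC dG) piD (piNN piC)) ?bH //.
by rewrite (key' Rb Ag) mul1g.
Qed.

Lemma Psi_reg be : be \in reg_embs Gam G -> Psi pi A C be \in reg_embs A C.
Proof.
move=> Rb; have [b1 bM bH bE bU] := regE Rb.
have ch g : g \in Gam -> compat pi G (be g) by move=> Gg; apply: (Hol_compat dG piC piD); apply: bH.
apply: regI.
- by move=> a nA; rewrite ffunE (negbTE nA).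
- move=> a a' Aa Aa'; rewrite !ffunE groupM ?Aa ?Aa' //.
  by rewrite bM ?inGam // (prj_mul dG piC piD) ?bH ?inGam.
- by move=> a Aa; rewrite ffunE Aa (prj_Hol dG piC piD) ?bH ?inGam.
- move=> c c' Cc Cc'; have [g Gg e] := bE c c' (inG Cc) (inG Cc').
  exists g.`_pi; first exact: memA.
  rewrite ffunE memA // -prj_be1 // (prjE dG piC piD (ch g Gg)) Cc e.
  exact: (dp_piC piC Cc').
- move=> c a a' Cc Aa Aa'; rewrite !ffunE Aa Aa' => e.
  apply: (bU c); [exact: inG | exact: inGam | exact: inGam | ].
  rewrite -(comb_pr_Hol dG piC piD (bH a (inGam Aa))).
  rewrite -(comb_pr_Hol dG piC piD (bH a' (inGam Aa'))).
  rewrite !key' // (combE dG piC piD) ?(prj_perm_on_Hol dG piC piD) ?bH ?inGam ?perm_on1 //.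
  rewrite (combE dG piC piD) ?(prj_perm_on_Hol dG piC piD) ?bH ?inGam ?perm_on1 //.
  by rewrite inG // (dp_piC piC Cc) e.
Qed.

Lemma Phi_reg f1 f2 : f1 \in reg_embs A C -> f2 \in reg_embs B D ->
  Phi pi Gam G f1 f2 \in reg_embs Gam G.
Proof.
move=> R1 R2; have [a1 aM aH aE aU] := regE R1; have [b1 bM bH bE bU] := regE R2.
have pA a : a \in A -> perm_on C (f1 a) by move=> Aa; apply: Hol_perm_on; apply: aH.
have pB b : b \in B -> perm_on D (f2 b) by move=> Bb; apply: Hol_perm_on; apply: bH.
have cE g x : g \in Gam -> x \in G ->
    Phi pi Gam G f1 f2 g x = f1 g.`_pi x.`_pi * f2 g.`_pi^' x.`_pi^'.
  by move=> Gg Gx; rewrite ffunE Gg (combE dG piC piD) ?pA ?pB ?memA ?memB ?Gx.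
apply: regI.
- by move=> g nG; rewrite ffunE (negbTE nG).
- move=> g h Gg Gh; rewrite !ffunE Gg Gh groupM //.
  rewrite (dp_M dA piA piB) // (dp_M' dA piA piB) // aM ?memA // bM ?memB //.
  by rewrite (comb_mul dG piC piD) ?pA ?pB ?memA ?memB.
- move=> g Gg; rewrite ffunE Gg (comb_Hol dG piC piD) ?aH ?bH ?memA ?memB //.
- move=> x y Gx Gy.
  have [a Aa ea] := aE _ _ (memC Gx) (memC Gy).
  have [b Bb eb] := bE _ _ (memD Gx) (memD Gy).
  have Gab : a * b \in Gam by rewrite groupM //; [apply: inGam | apply: inGam'].
  exists (a * b) => //; rewrite cE //.
  by rewrite (dp_pi dA piA piB) // (dp_pi' dA piA piB) // ea eb consttC.
- move=> x g g' Gx Gg Gg'; rewrite !cE // => e.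
  have mC h : h \in Gam -> f1 h.`_pi x.`_pi \in C by move=> Gh; rewrite (perm_closed _ (pA _ (memA Gh))) memC.
  have mD h : h \in Gam -> f2 h.`_pi^' x.`_pi^' \in D by move=> Gh; rewrite (perm_closed _ (pB _ (memB Gh))) memD.
  have e1 := congr1 (fun t => t.`_pi) e; have e2 := congr1 (fun t => t.`_pi^') e.
  rewrite /= !(dp_pi dG piC piD) ?mC ?mD // in e1.
  rewrite /= !(dp_pi' dG piC piD) ?mC ?mD // in e2.
  apply: (dp_eq (pi := pi)).
    exact: (aU _ _ _ (memC Gx) (memA Gg) (memA Gg') e1).
  exact: (bU _ _ _ (memD Gx) (memB Gg) (memB Gg') e2).
Qed.

Lemma Phi_Psi be : be \in reg_embs Gam G ->
  Phi pi Gam G (Psi pi A C be) (Psi pi^' B D be) = be.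
Proof.
move=> Rb; have [b1 bM bH bE bU] := regE Rb.
apply/ffunP=> g; rewrite !ffunE.
have [Gg|nG] := boolP (g \in Gam); last by rewrite b1.
rewrite memA // memB // -prj_be1 // -prj_be2 //.
exact: (comb_pr_Hol dG piC piD (bH g Gg)).
Qed.

Lemma Psi_Phi f1 f2 : pre A C f1 -> pre B D f2 ->
  Psi pi A C (Phi pi Gam G f1 f2) = f1.
Proof.
case=> a1 a2 a3 [b1 b2 b3]; apply/ffunP=> a; rewrite !ffunE.
have [Aa|nA] := boolP (a \in A); last by rewrite a1.
rewrite inGam // (dp_piC piA Aa) (dp_piC' piA Aa) b2.
by rewrite (prj_comb dG piC piD) ?a3 ?perm_on1.
Qed.

Lemma Psi'_Phi f1 f2 : pre A C f1 -> pre B D f2 ->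
  Psi pi^' B D (Phi pi Gam G f1 f2) = f2.
Proof.
case=> a1 a2 a3 [b1 b2 b3]; apply/ffunP=> b; rewrite !ffunE.
have [Bb|nB] := boolP (b \in B); last by rewrite b1.
rewrite inGam' // (dp_piD piB Bb) (dp_piD' piB Bb) a2.
by rewrite (prj_comb' dG piC piD) ?b3 ?perm_on1.
Qed.

Lemma Phi_conjE f1 f2 s1 s2 : pre A C f1 -> pre B D f2 -> perm_on C s1 -> perm_on D s2 ->
  conj_emb (Phi pi Gam G f1 f2) (comb pi G s1 s2) =
  Phi pi Gam G (conj_emb f1 s1) (conj_emb f2 s2).
Proof.
case=> a1 a2 a3 [b1 b2 b3] q1 q2; apply/ffunP=> g; rewrite !ffunE.
have [Gg|nG] := boolP (g \in Gam); last by rewrite conj1g.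
by rewrite (comb_conj dG piC piD) ?a3 ?b3 ?memA ?memB.
Qed.

End Main1.

Definition RB (gT hT : finGroupType) (B : {set hT}) (f f' : {ffun gT -> {perm hT}}) :=
  [exists s in Aut B, f' == conj_emb f s].

Section Equiv.
Variables (gT hT : finGroupType) (B : {group hT}).
Implicit Types f : {ffun gT -> {perm hT}}.

Lemma RB_refl f : RB B f f.
Proof.
apply/exists_inP; exists 1; first exact: group1.
by apply/eqP/ffunP=> a; rewrite ffunE conjg1.
Qed.

Lemma RB_sym f g : RB B f g -> RB B g f.
Proof.
case/exists_inP=> s As /eqP ->; apply/exists_inP; exists s^-1; first by rewrite groupV.
by apply/eqP/ffunP=> a; rewrite !ffunE conjgK.
Qed.

Lemma RB_trans f g h : RB B f g -> RB B g h -> RB B f h.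
Proof.
case/exists_inP=> s As /eqP ->; case/exists_inP=> t At /eqP ->.
apply/exists_inP; exists (s * t); first by rewrite groupM.
by apply/eqP/ffunP=> a; rewrite !ffunE conjgM.
Qed.
End Equiv.

Section Split.
Variables (gT hT : finGroupType) (pi : nat_pred) (Gam A B : {group gT}) (G C D : {group hT}).
Hypotheses (dA : A \x B = Gam) (piA : pi.-group A) (piB : pi^'.-group B)
  (dG : C \x D = G) (piC : pi.-group C) (piD : pi^'.-group D)
  (cAC : #|A| = #|C|) (cBD : #|B| = #|D|).

Lemma PhiR f1 f2 g1 g2 : f1 \in reg_embs A C -> f2 \in reg_embs B D ->
  g1 \in reg_embs A C -> g2 \in reg_embs B D ->
  RB G (Phi pi Gam G f1 f2) (Phi pi Gam G g1 g2) = RB C f1 g1 && RB D f2 g2.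
Proof.
move=> Rf1 Rf2 Rg1 Rg2.
have pf1 := reg_pre Rf1; have pf2 := reg_pre Rf2.
have pg1 := reg_pre Rg1; have pg2 := reg_pre Rg2.
apply/idP/andP.
  case/exists_inP=> s As /eqP e.
  have Hs := Aut_Hol As.
  have As1 := prj_Aut dG piC piD As.
  have As2 := prj_Aut (dpC dG) piD (piNN piC) As.
  have q1 : perm_on C (prj pi C s) by case/setIdP: As1.
  have q2 : perm_on D (prj pi^' D s) by case/setIdP: As2.
  move: e; rewrite -(comb_pr_Hol dG piC piD Hs) (Phi_conjE dA piA piB dG piC piD) // => e.
  split; apply/exists_inP.
    exists (prj pi C s) => //; apply/eqP.
    rewrite -(Psi_Phi dA piA dG piC piD pg1 pg2) e.
    by rewrite (Psi_Phi dA piA dG piC piD (pre_conj pf1 q1) (pre_conj pf2 q2)).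
  exists (prj pi^' D s) => //; apply/eqP.
  rewrite -(Psi'_Phi dA piB dG piC piD pg1 pg2) e.
  by rewrite (Psi'_Phi dA piB dG piC piD (pre_conj pf1 q1) (pre_conj pf2 q2)).
case=> /exists_inP[s1 As1 /eqP e1] /exists_inP[s2 As2 /eqP e2].
have q1 : perm_on C s1 by case/setIdP: As1.
have q2 : perm_on D s2 by case/setIdP: As2.
apply/exists_inP; exists (comb pi G s1 s2); first exact: (comb_Aut dG piC piD).
by rewrite e1 e2 (Phi_conjE dA piA piB dG piC piD).
Qed.

Lemma split_e : e_HG Gam G = (e_HG A C * e_HG B D)%N.
Proof.
change (#|[set cls (reg_embs Gam G) (@RB gT hT G) f | f in reg_embs Gam G]| =
  #|[set cls (reg_embs A C) (@RB gT hT C) f | f in reg_embs A C]| *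
  #|[set cls (reg_embs B D) (@RB gT hT D) f | f in reg_embs B D]|)%N.
apply: (count_classes (Phi := Phi pi Gam G)).
- by move=> f1 f2; apply: (Phi_reg dA piA piB dG piC piD).
- move=> f Rf.
  exists (Psi pi A C f); first exact: (Psi_reg dA piA piB dG piC piD cAC cBD).
  exists (Psi pi^' B D f).
    exact: (Psi_reg (dpC dA) piB (piNN piA) (dpC dG) piD (piNN piC) cBD cAC).
  by rewrite (Phi_Psi dA piA piB dG piC piD cAC cBD).
- exact: PhiR.
- by move=> f _; apply: RB_refl.
- by move=> f _; apply: RB_refl.
- by move=> f g _ _; apply: RB_sym.
- by move=> f g _ _; apply: RB_sym.
- by move=> f g h _ _ _; apply: RB_trans.
- by move=> f g h _ _ _; apply: RB_trans.
Qed.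

End Split.

Lemma e_triv (gT hT : finGroupType) (Gam : {group gT}) (G : {group hT}) :
  #|Gam| = 1%N -> #|G| = 1%N -> e_HG Gam G = 1%N.
Proof.
move=> c1 c2; have e1 := card1_trivg c1; have e2 := card1_trivg c2.
pose f0 : {ffun gT -> {perm hT}} := [ffun => 1].
rewrite /e_HG; have -> : reg_embs Gam G = [set f0].
  apply/setP=> f; rewrite in_set1; apply/idP/eqP => [Rf|->].
    have [b1 _ _ _ _] := regE Rf.
    apply/ffunP=> a; rewrite ffunE.
    have [Ga|nGa] := boolP (a \in Gam); last exact: b1.
    by move: Ga; rewrite e1 in_set1 => /eqP ->; apply: reg_one Rf.
  apply: regI.
  - by move=> a _; rewrite ffunE.
  - by move=> a b _ _; rewrite !ffunE mulg1.
  - move=> a _; rewrite ffunE; apply: (HolI (g := 1) (s := 1)) => //.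
    + by move=> x _; rewrite perm1.
    + by move=> x _; rewrite invg1 mulg1 !perm1.
  - move=> x y; rewrite e2 !in_set1 => /eqP -> /eqP ->.
    by exists 1; rewrite ?group1 // ffunE perm1.
  - by move=> x a a' _; rewrite e1 !in_set1 => /eqP -> /eqP ->.
by rewrite imset_set1 cards1.
Qed.

Lemma main_ind (gT hT : finGroupType) (GamS : nat -> {group gT}) (GS : nat -> {group hT}) n :
  forall (Gam : {group gT}) (G : {group hT}), #|Gam| <= n ->
  nilpotent Gam -> nilpotent G -> #|Gam| = #|G| ->
  (forall p, p \in primes #|Gam| -> GamS p \in 'Syl_p(Gam)) ->
  (forall p, p \in primes #|G| -> GS p \in 'Syl_p(G)) ->
  e_HG Gam G = (\prod_(p <- primes #|Gam|) e_HG (GamS p) (GS p))%N.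
Proof.
elim: n => [|n IH] Gam G le nG nH cG sG sH.
  by move: le; rewrite leqn0 => /eqP e; move: (cardG_gt0 Gam); rewrite e.
case eps: (primes #|Gam|) => [|p rest].
  rewrite big_nil; have : #|Gam| < 2 by rewrite -primes_eq0 eps.
  have := cardG_gt0 Gam => h1 h2.
  have c1 : #|Gam| = 1%N by apply/eqP; rewrite eqn_leq -ltnS h2 h1.
  by apply: e_triv => //; rewrite -cG.
have pP : p \in primes #|Gam| by rewrite eps mem_head.
have SA := sG p pP; have SC : GS p \in 'Syl_p(G) by apply: sH; rewrite -cG.
move: SA SC; rewrite !inE => SA SC.
pose B := 'O_p^'(Gam)%G; pose D := 'O_p^'(G)%G.
have hB := nilpotent_pcore_Hall p^' nG; have hD := nilpotent_pcore_Hall p^' nH.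
have dA : GamS p \x B = Gam.
  by rewrite (nilpotent_Hall_pcore nG SA); apply: nilpotent_pcoreC.
have dG : GS p \x D = G.
  by rewrite (nilpotent_Hall_pcore nH SC); apply: nilpotent_pcoreC.
have piA : p.-group (GamS p) := pHall_pgroup SA.
have piC : p.-group (GS p) := pHall_pgroup SC.
have piB : p^'.-group B := pcore_pgroup _ _.
have piD : p^'.-group D := pcore_pgroup _ _.
have cAC : #|GamS p| = #|GS p| by rewrite (card_Hall SA) (card_Hall SC) cG.
have cB : #|B| = (#|Gam|`_p^')%N by rewrite (card_Hall hB).
have cBD : #|B| = #|D| by rewrite cB (card_Hall hD) cG.
rewrite (split_e dA piA piB dG piC piD cAC cBD) big_cons; congr (_ * _)%N.
have pnr : p \notin rest.
  by have := primes_uniq #|Gam|; rewrite eps /= => /andP[].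
have primesB : primes #|B| = rest.
  rewrite cB primes_part eps /= !inE /= eqxx /=.
  apply/all_filterP/allP=> q qr; rewrite !inE /=.
  by apply: contraNneq pnr => <-.
rewrite -primesB.
apply: IH.
- rewrite -ltnS; apply: leq_trans le.
  rewrite cB -{2}(partnC p (cardG_gt0 Gam)) ltn_Pmull ?partn_gt0 //.
  by rewrite p_part_gt1 -[p \in _]/(p \in primes _) pP.
- exact: nilpotentS (pcore_sub _ _) nG.
- exact: nilpotentS (pcore_sub _ _) nH.
- exact: cBD.
- move=> q; rewrite primesB => qr.
  have qG : q \in primes #|Gam| by rewrite eps inE qr orbT.
  have SQ : q.-Sylow(Gam) (GamS q) by move: (sG q qG); rewrite inE.
  rewrite inE.
  have qp : q \in p^' by rewrite !inE; apply: contraNneq pnr => <-.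
  apply: (pHall_subl _ (pcore_sub _ _) SQ).
  rewrite (sub_normal_Hall hB (pcore_normal _ _) (pHall_sub SQ)).
  exact: pi_pnat (pHall_pgroup SQ) qp.
- move=> q; rewrite -cBD primesB => qr.
  have qG : q \in primes #|G| by rewrite -cG eps inE qr orbT.
  have SQ : q.-Sylow(G) (GS q) by move: (sH q qG); rewrite inE.
  rewrite inE.
  have qp : q \in p^' by rewrite !inE; apply: contraNneq pnr => <-.
  apply: (pHall_subl _ (pcore_sub _ _) SQ).
  rewrite (sub_normal_Hall hD (pcore_normal _ _) (pHall_sub SQ)).
  exact: pi_pnat (pHall_pgroup SQ) qp.
Qed.


Unset Implicit Arguments.
Theorem theorem1 (gT hT : finGroupType) (Gam : {group gT}) (G : {group hT})
    (GamS : nat -> {group gT}) (GS : nat -> {group hT}) :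
  nilpotent Gam -> nilpotent G -> #|Gam| = #|G| ->
  (forall p, p \in primes #|Gam| -> GamS p \in 'Syl_p(Gam)) ->
  (forall p, p \in primes #|G| -> GS p \in 'Syl_p(G)) ->
  e_HG Gam G = (\prod_(p <- primes #|Gam|) e_HG (GamS p) (GS p))%N.
Proof. exact: (main_ind (GamS := GamS) (GS := GS) (leqnn #|Gam|)). Qed.
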